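(* Let $\mu,\nu$ be probability distributions on a finite set with $\mathrm{supp}\,\mu\subseteq\mathrm{supp}\,\nu$, and let $\epsilon\in[0,1]$. Then \[ D\big((1-\epsilon)\mu+\epsilon\nu\,\big\|\,\nu\big)\le(1-\epsilon)D(\mu\|\nu)-\big(1-\nu(\mathrm{supp}\,\mu)\big)\,\epsilon\log\frac1\epsilon, \] with the convention $0\log\frac10=0$.
   Context: $D(\mu\|\nu)=\sum_{x}\mu(x)\log_2\frac{\mu(x)}{\nu(x)}$ is the Kullback–Leibler divergence; $\mathrm{supp}\,\mu$ is the support of $\mu$ and $\nu(S)=\sum_{x\in S}\nu(x)$. *)

(* Defs.v *)
(* classical reals. A finite set is {0,...,n-1}; distributions
   are functions nat -> R, only their values on i < n matter. *)
From Stdlib Require Import Reals Lra.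
Open Scope R_scope.

Fixpoint sumR (n : nat) (f : nat -> R) : R :=
  match n with
  | O => 0
  | S k => sumR k f + f k
  end.

Definition log2 (x : R) : R := ln x / ln 2.

Definition is_prob (n : nat) (mu : nat -> R) : Prop :=
  (forall i, (i < n)%nat -> 0 <= mu i) /\ sumR n mu = 1.

Definition supp_sub (n : nat) (mu nu : nat -> R) : Prop :=
  forall i, (i < n)%nat -> mu i <> 0 -> nu i <> 0.

Definition KL (n : nat) (mu nu : nat -> R) : R :=
  sumR n (fun i => if Rlt_dec 0 (mu i) then mu i * log2 (mu i / nu i) else 0).

Definition mass_on_supp (n : nat) (mu nu : nat -> R) : R :=
  sumR n (fun i => if Rlt_dec 0 (mu i) then nu i else 0).

Definition xlog1x (x : R) : R := if Rlt_dec 0 x then x * log2 (1 / x) else 0.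

(* Main.v *)
Require Import Defs.
From Stdlib Require Import Reals.
From Stdlib Require Import Lra Lia.
Open Scope R_scope.

Lemma sumR_le n f g : (forall i, (i < n)%nat -> f i <= g i) -> sumR n f <= sumR n g.
Proof.
  induction n; simpl; intros H. lra.
  assert (sumR n f <= sumR n g) by (apply IHn; intros; apply H; lia).
  assert (f n <= g n) by (apply H; lia). lra.
Qed.

Lemma sumR_lin n f g a b : sumR n (fun i => a * f i + b * g i) = a * sumR n f + b * sumR n g.
Proof. induction n; simpl. ring. rewrite IHn; ring. Qed.

Lemma ln_le x : 0 < x -> ln x <= x - 1.
Proof. intros. pose proof (exp_ineq1_le (ln x)). rewrite exp_ln in H0; lra. Qed.

Lemma ln_div' x y : 0 < x -> 0 < y -> ln (x / y) = ln x - ln y.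
Proof.
  intros. unfold Rdiv. rewrite ln_mult, ln_Rinv; try lra. apply Rinv_0_lt_compat; lra.
Qed.

Lemma l2pos : 0 < ln 2.
Proof. pose proof ln_lt_2. lra. Qed.

Lemma term (m v e : R) : 0 <= m -> 0 <= v -> (m <> 0 -> v <> 0) -> 0 <= e -> e <= 1 ->
  (if Rlt_dec 0 ((1 - e) * m + e * v) then ((1 - e) * m + e * v) * log2 (((1 - e) * m + e * v) / v) else 0)
  <= (1 - e) * (if Rlt_dec 0 m then m * log2 (m / v) else 0)
     - (if Rlt_dec 0 m then 0 else v) * xlog1x e.
Proof.
  intros Hm Hv Hs He0 He1. pose proof l2pos as L2. unfold log2, xlog1x.
  set (p := (1 - e) * m + e * v).
  destruct (Rlt_dec 0 m) as [Hm'|Hm'].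
  - assert (Hv' : 0 < v) by (destruct Hv; auto; exfalso; apply Hs; lra).
    assert (Hp : 0 < p).
    { unfold p. destruct (Req_dec e 1). subst. lra.
      assert (0 < (1-e)*m) by (apply Rmult_lt_0_compat; lra).
      assert (0 <= e*v) by (apply Rmult_le_pos; lra). lra. }
    destruct (Rlt_dec 0 p); [|lra].
    rewrite !ln_div' by lra.
    assert (H1 : m * (ln p - ln m) <= p - m).
    { rewrite <- ln_div' by lra. pose proof (ln_le (p/m) ltac:(apply Rdiv_lt_0_compat; lra)).
      apply Rmult_le_compat_l with (r := m) in H; [|lra].
      replace (m * (p/m - 1)) with (p - m) in H by (field; lra). lra. }
    assert (H2 : v * (ln p - ln v) <= p - v).
    { rewrite <- ln_div' by lra. pose proof (ln_le (p/v) ltac:(apply Rdiv_lt_0_compat; lra)).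
      apply Rmult_le_compat_l with (r := v) in H; [|lra].
      replace (v * (p/v - 1)) with (p - v) in H by (field; lra). lra. }
    apply Rmult_le_compat_l with (r := 1 - e) in H1; [|lra].
    apply Rmult_le_compat_l with (r := e) in H2; [|lra].
    assert (K : p * (ln p - ln v) <= (1 - e) * (m * (ln m - ln v))).
    { unfold p in *. nra. }
    apply Rmult_le_compat_r with (r := / ln 2) in K;
      [|apply Rlt_le, Rinv_0_lt_compat; lra].
    unfold Rdiv. replace (p * ((ln p - ln v) * / ln 2)) with (p * (ln p - ln v) * / ln 2) by ring.
    rewrite Rmult_0_l, Rminus_0_r.
    replace ((1 - e) * (m * ((ln m - ln v) * / ln 2))) with ((1 - e) * (m * (ln m - ln v)) * / ln 2) by ring.
    exact K.
  - assert (m = 0) by lra. subst m.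
    assert (Hp : p = e * v) by (unfold p; ring). rewrite Hp.
    destruct (Rlt_dec 0 (e * v)) as [Hev|Hev].
    + assert (0 < e) by (destruct He0; auto; subst; lra).
      assert (0 < v) by (destruct Hv; auto; subst; lra).
      destruct (Rlt_dec 0 e); [|lra].
      replace (e * v / v) with e by (field; lra).
      unfold log2, Rdiv. rewrite Rmult_1_l, ln_Rinv by lra. lra.
    + destruct (Rlt_dec 0 e).
      * assert (v = 0) by (destruct Hv; auto; exfalso; apply Hev; apply Rmult_lt_0_compat; lra).
        subst. lra.
      * lra.
Qed.

Theorem lemma6 (n : nat) (mu nu : nat -> R) (eps : R)
  (Hmu : is_prob n mu) (Hnu : is_prob n nu) (Hsupp : supp_sub n mu nu)
  (He0 : 0 <= eps) (He1 : eps <= 1) :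
  KL n (fun i => (1 - eps) * mu i + eps * nu i) nu
  <= (1 - eps) * KL n mu nu - (1 - mass_on_supp n mu nu) * xlog1x eps.
Proof.
  destruct Hmu as [Hm0 Hm1], Hnu as [Hn0 Hn1].
  assert (E : (1 - eps) * KL n mu nu - (1 - mass_on_supp n mu nu) * xlog1x eps
    = sumR n (fun i => (1 - eps) * (if Rlt_dec 0 (mu i) then mu i * log2 (mu i / nu i) else 0)
        + (- xlog1x eps) * (if Rlt_dec 0 (mu i) then 0 else nu i))).
  { rewrite sumR_lin. unfold KL, mass_on_supp.
    assert (sumR n (fun i => if Rlt_dec 0 (mu i) then nu i else 0)
          + sumR n (fun i => if Rlt_dec 0 (mu i) then 0 else nu i) = 1).
    { rewrite <- Hn1. clear. induction n; simpl. ring. rewrite <- IHn.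
      destruct (Rlt_dec 0 (mu n)); ring. }
    nra. }
  rewrite E. unfold KL. apply sumR_le. intros i Hi.
  pose proof (term (mu i) (nu i) eps (Hm0 i Hi) (Hn0 i Hi) (Hsupp i Hi) He0 He1). lra.
Qed.
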